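(* Let $\rho$ be a good involution of the dihedral quandle $R_n$. (1) For each $i\in R_n$, $\rho(i)=i$ or $\rho(i)=i+n/2$; the latter occurs only if $n$ is even. (2) Let $n$ be even. If $\rho(i)=i+n/2$ for some $i$, then $\rho(j)=j+n/2$ for every $j$ with $i\equiv j \pmod 2$.
   Context: A quandle is a set $X$ with a binary operation $(x,y)\mapsto x^y$ such that $x^x=x$; for all $x,y$ there is a unique $z$ with $z^y=x$ (written $x^{y^{-1}}$); and $(x^y)^z=(x^z)^{(y^z)}$. A good involution of $X$ is a map $\rho:X\to X$ with $\rho\circ\rho={\rm id}$, $\rho(x^y)=\rho(x)^y$ and $x^{\rho(y)}=x^{y^{-1}}$ for all $x,y$. The dihedral quandle $R_n$ is $\mathbb{Z}/n\mathbb{Z}$ with $x^y=2y-x \pmod n$. *)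

(* Defs.v *)
From mathcomp Require Import all_boot.
Set Implicit Arguments. Unset Strict Implicit. Unset Printing Implicit Defensive.

(* Dihedral quandle R_n on Z/nZ, represented as 'I_n (n > 0):  x^y = 2y - x mod n. *)

Definition dih_op n (Hn : 0 < n) (x y : 'I_n) : 'I_n :=
  Ordinal (ltn_pmod (y.*2 + (n - x)) Hn).

Definition shift_half n (Hn : 0 < n) (i : 'I_n) : 'I_n :=
  Ordinal (ltn_pmod (i + n./2) Hn).

(* Good involution of a quandle (X, op).  x^{y^{-1}} is the unique z with
   z^y = x, so  x^{rho y} = x^{y^{-1}}  is stated as: z^y = x -> x^{rho y} = z. *)
Definition good_involution (X : Type) (op : X -> X -> X) (rho : X -> X) : Prop :=
  (forall x, rho (rho x) = x) /\
  (forall x y, rho (op x y) = op (rho x) y) /\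
  (forall x y z, op z y = x -> op x (rho y) = z).

(* Main.v *)
Require Import Defs.
From mathcomp Require Import all_boot.
From mathcomp Require Import zify.

Lemma modE (a n : nat) : 0 < n -> a < 3 * n ->
  (a %% n = a /\ a < n) \/ (a %% n = a - n /\ n <= a /\ a < 2 * n) \/ (a %% n = a - 2 * n /\ 2 * n <= a).
Proof.
move=> Hn Ha.
have Hq : a %/ n < 3 by rewrite ltn_divLR.
have Hr : a %% n < n by rewrite ltn_mod.
have E := divn_eq a n.
move: Hq E Hr; case: (a %/ n) => [|[|[|q]]] //= _ E Hr; lia.
Qed.

Lemma even_half n : ~~ odd n -> n = n./2 + n./2.
Proof. move=> Ho; have := odd_double_half n; rewrite (negbTE Ho) -addnn; lia. Qed.

Ltac modE_tac Hn :=
  repeat match goal with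
  | |- context [?a %% ?m] =>
      lazymatch a with context [_ %% _] => fail | _ => idtac end;
      let H := fresh in
      (have H : a < 3 * m by lia);
      case: (@modE _ _ Hn H) => [[-> ?]|[[-> [? ?]]|[-> ?]]]; clear H
  end.

Lemma shift_aux (h x y:nat) (Hn: 0<h+h) : y < h + h -> x < h + h ->
  (y + y + (h + h - (x + h) %% (h+h))) %% (h+h) = ((y + y + (h+h - x)) %% (h+h) + h) %% (h+h).
Proof. move=> ? ?. modE_tac Hn. all: lia. Qed.

Theorem lemma3p3 (n : nat) (Hn : 0 < n) (rho : 'I_n -> 'I_n) :
  good_involution (dih_op Hn) rho ->
  (forall i : 'I_n, rho i = i \/ (~~ odd n /\ rho i = shift_half Hn i)) /\
  (~~ odd n -> forall i : 'I_n, rho i = shift_half Hn i ->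
     forall j : 'I_n, odd i = odd j -> rho j = shift_half Hn j).
Proof.
move=> [H1 [H2 H3]]; split.
- move=> i.
  have Hii : dih_op Hn i i = i.
    apply: val_inj => /=; have := ltn_ord i; rewrite -addnn.
    move=> Hi; modE_tac Hn; lia.
  have := H3 _ _ _ Hii => /(congr1 val) /=.
  have Hi := ltn_ord i; have Hr := ltn_ord (rho i).
  rewrite -addnn.
  have Eh := odd_double_half n; rewrite -addnn in Eh.
  case Ho: (odd n) Eh => /= Eh.
  + modE_tac Hn; move=> E; left; apply: val_inj => /=; lia.
  + modE_tac Hn; move=> E; (try by left; apply: val_inj => /=; lia);
    right; split => //; apply: val_inj => /=; modE_tac Hn; lia.
- move=> Ho i Hi j Hij.
  have Eh := @even_half _ Ho.
  have Hsh : forall x y, dih_op Hn (shift_half Hn x) y = shift_half Hn (dih_op Hn x y).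
    move=> x y; apply: val_inj => /=; rewrite -!addnn.
    have Hh : 0 < n./2 + n./2 by rewrite -Eh.
    have := @shift_aux _ x y Hh; rewrite -Eh; apply; apply: ltn_ord.
  have Hiord := ltn_ord i; have Hjord := ltn_ord j.
  have Ej : (i + j)./2 + (i + j)./2 = i + j.
    have := odd_double_half (i + j); rewrite oddD Hij addbb /= -addnn; apply.
  have Hy : (i + j)./2 < n by lia.
  have Hj : dih_op Hn i (Ordinal Hy) = j.
    apply: val_inj => /=; rewrite -addnn Ej; modE_tac Hn; lia.
  by rewrite -Hj H2 Hi Hsh.
Qed.
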